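(* Let $\mathbb{F}=\mathbb{GF}(2^n)$, let $V$ be a set of variables, and let $\Sigma=\mathbb{F}\cup\{\oplus,\otimes,f_1,\dots,f_t\}$ be a signature with $\Sigma\cap V=\emptyset$. Fix a total order $\geq_s$ on $V\uplus\Sigma$, and let $\geq_l$ (factor order) and $\geq_p$ (monomial order) be as defined in the context. Then the monomial order $\geq_p$ is a total order on monomials, where two monomials whose factor sequences sorted in descending $\geq_l$-order coincide are regarded as the same monomial.
   Context: Terms: the set $T[\Sigma,V]$ is the smallest set containing $\mathbb{F}\cup V$ and closed under $\tau\oplus\tau'$, $\tau\otimes\tau'$ and $f_j(\tau)$ ($j\in[1,t]$); here $\oplus,\otimes$ are binary symbols (addition and multiplication of $\mathbb{F}$) and $f_1,\dots,f_t$ are unary symbols. $T_{\backslash\oplus}(\Sigma,V)$ denotes the terms not using $\oplus$. A factor is a term that is either in $\mathbb{F}\cup V$ or of the form $f_i(\tau')$ with $\tau'\in T_{\backslash\oplus}(\Sigma,V)$. A monomial is a product $\alpha_1\otimes\cdots\otimes\alpha_k$ ($k\ge1$) of nonzero factors. Factor order: $\alpha\geq_l\alpha'$ iff one of: (i) $\alpha,\alpha'\in\mathbb{F}\cup V$ and $\alpha\geq_s\alpha'$; (ii) $\alpha=f(\tau)$, $\alpha'=f'(\tau')$ and either $f\geq_s f'$, or $f=f'$ and $\tau\geq_p\tau'$; (iii) $\alpha=f(\tau)$ and $f\geq_s\alpha'$, or $\alpha'=f(\tau)$ and $\alpha\geq_s f$. For a monomial $m=\alpha_1\cdots\alpha_k$,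 ${\sf sort}_{\geq_l}(\alpha_1,\dots,\alpha_k)$ is the sequence of its factors sorted in descending $\geq_l$-order. Monomial order: $m\geq_p m'$ iff ${\sf sort}_{\geq_l}$ of the factors of $m$ is lexicographically $\geq$ that of $m'$ (with respect to $\geq_l$; a proper prefix is smaller). The definitions of $\geq_l$ and $\geq_p$ are mutually recursive on term structure. *)

(* Defs.v *)
From mathcomp Require Import all_boot all_algebra.
Set Implicit Arguments. Unset Strict Implicit. Unset Printing Implicit Defensive.

(* Symbols of V ⊎ Σ, with Σ = F ∪ {⊕, ⊗, f_1, ..., f_t}; f_j is SFun j, j : 'I_t
   (indices shifted to 0..t-1). V and Σ are disjoint by construction. *)
Inductive sym (F V : Type) (t : nat) : Type :=
  | SConst of F
  | SVar of V
  | SAdd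
  | SMul
  | SFun of 'I_t.
Arguments SAdd {F V t}. Arguments SMul {F V t}.

Inductive term (F V : Type) (t : nat) : Type :=
  | TConst of F
  | TVar of V
  | TAdd of term F V t & term F V t
  | TMul of term F V t & term F V t
  | TApp of 'I_t & term F V t.

Section TermDefs.
Context {F : finFieldType} {V : eqType} {t : nat}.
Notation term := (term F V t).
Notation sym := (sym F V t).

Fixpoint tsize (x : term) : nat :=
  match x with
  | TConst _ | TVar _ => 1
  | TAdd a b | TMul a b => (tsize a + tsize b).+1
  | TApp _ a => (tsize a).+1
  end.

Fixpoint noadd (x : term) : bool :=
  match x with
  | TConst _ | TVar _ => true
  | TAdd _ _ => false
  | TMul a b => noadd a && noadd b
  | TApp _ a => noadd a
  end.

Definition is_factor (x : term) : bool :=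
  match x with
  | TConst _ | TVar _ => true
  | TApp _ a => noadd a
  | _ => false
  end.

Definition is_nzfactor (x : term) : bool :=
  is_factor x && (match x with TConst c => c != 0%R | _ => true end).

Fixpoint factors (x : term) : seq term :=
  match x with
  | TMul a b => factors a ++ factors b
  | _ => [:: x]
  end.

Definition is_monomial (m : term) : bool := all is_nzfactor (factors m).

Fixpoint lexge (T : Type) (le : rel T) (s1 s2 : seq T) : bool :=
  match s1, s2 with
  | [::], [::] => true
  | _ :: _, [::] => true
  | [::], _ :: _ => false
  | x :: s, y :: s' =>
      (le x y && ~~ le y x) || [&& le x y, le y x & lexge le s s']
  end.

Variable ges : rel sym.

Definition leaf_sym (x : term) : option sym :=
  match x with
  | TConst c => Some (SConst V t c)
  | TVar v => Some (SVar F t v)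
  | _ => None
  end.

(* The mutually recursive factor order ≥_l, computed with fuel k
   (k larger than the nesting depth suffices). *)
Fixpoint ge_lf (k : nat) (a b : term) : bool :=
  match k with
  | 0 => false
  | k'.+1 =>
    match a, b with
    | TApp f u, TApp f' u' =>
        ((f != f') && ges (SFun F V f) (SFun F V f'))
        || ((f == f') &&
            lexge (ge_lf k') (sort (ge_lf k') (factors u))
                             (sort (ge_lf k') (factors u')))
    | TApp f _, _ =>
        if leaf_sym b is Some s then ges (SFun F V f) s else false
    | _, TApp f _ =>
        if leaf_sym a is Some s then ges s (SFun F V f) else false
    | _, _ =>
        match leaf_sym a, leaf_sym b with
        | Some s, Some s' => ges s s'
        | _, _ => false
        end
    end
  end.

Definition ge_l (a b : term) : bool := ge_lf (tsize a + tsize b) a b.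

Definition sortf (m : term) : seq term := sort ge_l (factors m).

Definition ge_p (m m' : term) : bool := lexge ge_l (sortf m) (sortf m').

(* Identification of monomials: sorted factor sequences coincide, where
   factors f(τ), f(τ') coincide when τ, τ' are (recursively) identified. *)
Fixpoint same_ff (k : nat) (a b : term) : bool :=
  match k with
  | 0 => false
  | k'.+1 =>
    match a, b with
    | TConst c, TConst c' => c == c'
    | TVar v, TVar v' => v == v'
    | TApp f u, TApp f' u' => (f == f') && all2 (same_ff k') (sortf u) (sortf u')
    | _, _ => false
    end
  end.

Definition same_f (a b : term) : bool := same_ff (tsize a + tsize b) a b.

Definition same_mono (m m' : term) : bool := all2 same_f (sortf m) (sortf m').

End TermDefs.

Definition total_order (T : Type) (le : rel T) : Prop :=
  [/\ forall x, le x x,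
      forall x y, le x y -> le y x -> x = y,
      forall x y z, le x y -> le y z -> le x z
    & forall x y, le x y || le y x].

(* Main.v *)
Require Import Defs.
From mathcomp Require Import all_boot all_algebra.
From mathcomp Require Import zify.
From Stdlib Require Import FunctionalExtensionality.
Set Implicit Arguments. Unset Strict Implicit. Unset Printing Implicit Defensive.

Lemma sort_eq_in (T : Type) (P : pred T) (r1 r2 : rel T) s :
  (forall x y, P x -> P y -> r1 x y = r2 x y) -> all P s -> sort r1 s = sort r2 s.
Proof.
move=> H /all_sigP [s' ->]; rewrite !sort_map; congr (map _ (sort _ _)).
apply: functional_extensionality => x; apply: functional_extensionality => y.
by rewrite /= H //; [case: x | case: y].
Qed.

Lemma lexge_eq_in (T : Type) (P : pred T) (r1 r2 : rel T) s1 s2 :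
  (forall x y, P x -> P y -> r1 x y = r2 x y) -> all P s1 -> all P s2 ->
  lexge r1 s1 s2 = lexge r2 s1 s2.
Proof.
move=> H; elim: s1 s2 => [|x s IH] [|y s'] //= /andP[Px Ps] /andP[Py Ps'].
by rewrite !H // IH.
Qed.

Section Lex.
Variables (T : Type) (P : pred T) (r : rel T).

Lemma lexge_refl s : (forall x, P x -> r x x) -> all P s -> lexge r s s.
Proof.
move=> H; elim: s => //= x s IH /andP[Px Ps]; rewrite H //= IH //; exact: orbT.
Qed.

Lemma lexge_total s1 s2 : (forall x y, P x -> P y -> r x y || r y x) ->
  all P s1 -> all P s2 -> lexge r s1 s2 || lexge r s2 s1.
Proof.
move=> H; elim: s1 s2 => [|x s IH] [|y s'] //= /andP[Px Ps] /andP[Py Ps'].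
have := H x y Px Py; case: (r x y); case: (r y x) => //= _; exact: IH.
Qed.

Lemma lexge_trans s1 s2 s3 :
  (forall x y z, P x -> P y -> P z -> r x y -> r y z -> r x z) ->
  all P s1 -> all P s2 -> all P s3 ->
  lexge r s1 s2 -> lexge r s2 s3 -> lexge r s1 s3.
Proof.
move=> Ht; elim: s1 s2 s3 => [|x s IH] [|y s'] [|z s''] //=.
move=> /andP[Px Ps] /andP[Py Ps'] /andP[Pz Ps''].
case/orP => [/andP[xy nyx] | /and3P[xy yx l1]];
case/orP => [/andP[yz nzy] | /and3P[yz zy l2]].
- rewrite (Ht x y z) //=; apply/orP; left; apply/negP => zx.
  by move/negP: nzy; apply; exact: (Ht z x y).
- rewrite (Ht x y z) //=; apply/orP; left; apply/negP => zx.
  by move/negP: nyx; apply; exact: (Ht y z x).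
- rewrite (Ht x y z) //=; apply/orP; left; apply/negP => zx.
  by move/negP: nzy; apply; exact: (Ht z x y).
- rewrite (Ht x y z) // (Ht z y x) //=; exact: (IH s' s'').
Qed.

Lemma lexge_antisym s1 s2 : lexge r s1 s2 -> lexge r s2 s1 ->
  all2 (fun x y => r x y && r y x) s1 s2.
Proof.
elim: s1 s2 => [|x s IH] [|y s'] //=.
case/orP => [/andP[xy nyx] | /and3P[xy yx l1]].
  by case/orP => [/andP[yx _] | /and3P[yx _ _]]; rewrite yx in nyx.
case/orP => [/andP[_ nxy] | /and3P[_ _ l2]]; first by rewrite xy in nxy.
by rewrite xy yx /= IH.
Qed.
End Lex.

Lemma all2_mono_in (T : Type) (P : pred T) (r1 r2 : rel T) s1 s2 :
  (forall x y, P x -> P y -> r1 x y -> r2 x y) -> all P s1 -> all P s2 ->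
  all2 r1 s1 s2 -> all2 r2 s1 s2.
Proof.
move=> H; elim: s1 s2 => [|x s IH] [|y s'] //= /andP[Px Ps] /andP[Py Ps'].
by case/andP => h1 h2; rewrite H // IH.
Qed.

Section Main.
Variables (F : finFieldType) (V : eqType) (t : nat) (ges : rel (sym F V t)).
Hypothesis hges : total_order ges.
Notation term := (Defs.term F V t).
Local Notation tsize := Defs.tsize.

Lemma tsize_gt0 (x : term) : 0 < tsize x.
Proof. by case: x. Qed.

Lemma factors_size (u : term) N : tsize u <= N -> all (fun x => tsize x <= N) (factors u).
Proof.
elim: u N => [c|v|a IHa b IHb|a IHa b IHb|f a IHa] N //= H; rewrite ?H //.
rewrite all_cat IHa ?IHb //; lia.
Qed.

Lemma factors_good (u : term) N : noadd u -> tsize u <= N ->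
  all (fun x => is_factor x && (tsize x <= N)) (factors u).
Proof.
elim: u N => [c|v|a IHa b IHb|a IHa b IHb|f a IHa] N //= H1 H2; rewrite ?H1 ?H2 //.
case/andP: H1 => h1 h2; rewrite all_cat IHa ?IHb //; lia.
Qed.

Lemma ge_lf_stable k : forall k' (a b : term), maxn (tsize a) (tsize b) <= k ->
  maxn (tsize a) (tsize b) <= k' -> ge_lf ges k a b = ge_lf ges k' a b.
Proof.
elim: k => [|k IH] [|k'] a b;
  try (by move: (tsize_gt0 a) (tsize_gt0 b); lia).
move=> h1 h2.
case: a h1 h2 => [c|v|x y|x y|f u]; case: b => [c'|v'|x' y'|x' y'|f' u'] //= h1 h2.
set M := maxn (tsize u) (tsize u').
have H : forall x y, (fun x : term => tsize x <= M) x -> (fun x : term => tsize x <= M) y ->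
   ge_lf ges k x y = ge_lf ges k' x y.
  by move=> x y /= hx hy; apply: IH; lia.
have A1' : all (fun x => tsize x <= M) (factors u) by apply: factors_size; lia.
have A2' : all (fun x => tsize x <= M) (factors u') by apply: factors_size; lia.
rewrite (sort_eq_in H A1') (sort_eq_in H A2').
rewrite (lexge_eq_in (P := fun x : term => tsize x <= M) (r2 := ge_lf ges k')) //
  all_sort; done.
Qed.

Lemma ge_l_fuel k (x y : term) : maxn (tsize x) (tsize y) <= k ->
  ge_lf ges k x y = ge_l ges x y.
Proof. by move=> h; rewrite /ge_l; apply: ge_lf_stable => //; lia. Qed.

Lemma ge_lE (a b : term) : ge_l ges a b =
  match a, b with
  | TApp f u, TApp f' u' =>
      ((f != f') && ges (SFun F V f) (SFun F V f'))
      || ((f == f') && lexge (ge_l ges) (sortf ges u) (sortf ges u'))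
  | TApp f _, _ => if leaf_sym b is Some s then ges (SFun F V f) s else false
  | _, TApp f _ => if leaf_sym a is Some s then ges s (SFun F V f) else false
  | _, _ => match leaf_sym a, leaf_sym b with
            | Some s, Some s' => ges s s' | _, _ => false end
  end.
Proof.
rewrite /ge_l.
have hK : maxn (tsize a) (tsize b) <= (tsize a + tsize b).-2.+1.
  by move: (tsize_gt0 a) (tsize_gt0 b); lia.
have -> : tsize a + tsize b = (tsize a + tsize b).-2.+2.
  by move: (tsize_gt0 a) (tsize_gt0 b); lia.
move: (_.-2) hK => K hK.
case: a hK => [c|v|x y|x y|f u]; case: b => [c'|v'|x' y'|x' y'|f' u'] //= hK.
set M := maxn (tsize u) (tsize u').
have H : forall x y, (fun x : term => tsize x <= M) x -> (fun x : term => tsize x <= M) y ->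
   ge_lf ges K.+1 x y = ge_l ges x y.
  by move=> x y hx hy; apply: ge_l_fuel; simpl in hx, hy; lia.
have A1' : all (fun x => tsize x <= M) (factors u) by apply: factors_size; lia.
have A2' : all (fun x => tsize x <= M) (factors u') by apply: factors_size; lia.
rewrite /sortf (sort_eq_in H A1') (sort_eq_in H A2').
rewrite (lexge_eq_in (P := fun x : term => tsize x <= M) (r2 := ge_l ges)) //
  all_sort; done.
Qed.

Lemma ge_l_refl N : forall a : term, is_factor a -> tsize a <= N -> ge_l ges a a.
Proof.
case: hges => Hr _ _ _.
elim: N => [|N IH] a Ha Hs; first by move: (tsize_gt0 a); lia.
case: a Ha Hs => [c|v|x y|x y|f u] //= Ha Hs; rewrite ge_lE /=; try exact: Hr.
rewrite eqxx /=.
apply: (lexge_refl (P := fun x => is_factor x && (tsize x <= N))).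
  by move=> x /andP[h1 h2]; apply: IH.
by rewrite /sortf all_sort; apply: factors_good => //; lia.
Qed.

Lemma ge_l_total N : forall a b : term, is_factor a -> is_factor b ->
  tsize a <= N -> tsize b <= N -> ge_l ges a b || ge_l ges b a.
Proof.
case: hges => Hr Ha Ht Htot.
elim: N => [|N IH] a b Hfa Hfb Sa Sb; first by move: (tsize_gt0 a); lia.
case: a Hfa Sa => [c|v|x y|x y|f u] //= Hfa Sa;
case: b Hfb Sb => [c'|v'|x' y'|x' y'|f' u'] //= Hfb Sb; rewrite !ge_lE /=;
  try exact: Htot.
case: (eqVneq f f') => [<-|ne].
  rewrite /=.
  apply: (lexge_total (P := fun x => is_factor x && (tsize x <= N))).
  - by move=> x y /andP[h1 h2] /andP[h3 h4]; apply: IH.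
  - by rewrite /sortf all_sort; apply: factors_good => //; lia.
  - by rewrite /sortf all_sort; apply: factors_good => //; lia.
have ne' : f' != f by rewrite eq_sym.
rewrite /= ?orbF; exact: Htot.
Qed.

Lemma ge_l_trans N : forall a b c : term, is_factor a -> is_factor b -> is_factor c ->
  tsize a <= N -> tsize b <= N -> tsize c <= N ->
  ge_l ges a b -> ge_l ges b c -> ge_l ges a c.
Proof.
case: hges => Hr Ha Ht Htot.
elim: N => [|N IH] a b c Hfa Hfb Hfc Sa Sb Sc; first by move: (tsize_gt0 a); lia.
case: a Hfa Sa => [c1|v1|x1 y1|x1 y1|f u] //= Hfa Sa;
case: b Hfb Sb => [c2|v2|x2 y2|x2 y2|g v] //= Hfb Sb;
case: c Hfc Sc => [c3|v3|x3 y3|x3 y3|h w] //= Hfc Sc; rewrite !ge_lE /=;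
  try (by move=> h1 h2; apply: (Ht _ _ _ h1 h2));
  try (by move=> h1 /orP[/andP[_ h2]|/andP[/eqP<- _]] //; apply: (Ht _ _ _ h1 h2));
  try (by case/orP=> [/andP[_ h1]|/andP[/eqP<- _]] h2 //; apply: (Ht _ _ _ h1 h2));
  try (by move=> h1 h2; case: eqP => [e|_] /=;
          [subst; have := Ha _ _ h1 h2 | rewrite ?orbF; apply: (Ht _ _ _ h1 h2)]).
case/orP=> [/andP[n1 h1]|/andP[/eqP e1 l1]]; case/orP=> [/andP[n2 h2]|/andP[/eqP e2 l2]].
- case: eqP => [e|_] /=; last by rewrite orbF; exact: (Ht _ _ _ h1 h2).
  subst; case: (Ha _ _ h1 h2) => e; by rewrite e eqxx in n2.
- by rewrite -e2 n1 h1.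
- by rewrite e1 n2 h2.
- rewrite e1 e2 eqxx /=.
  apply: (lexge_trans (P := fun x => is_factor x && (tsize x <= N))) l1 l2.
  - by move=> x y z /andP[? ?] /andP[? ?] /andP[? ?]; apply: IH.
  - by rewrite /sortf all_sort; apply: factors_good => //; lia.
  - by rewrite /sortf all_sort; apply: factors_good => //; lia.
  - by rewrite /sortf all_sort; apply: factors_good => //; lia.
Qed.

Lemma ge_l_same k : forall a b : term, is_factor a -> is_factor b ->
  maxn (tsize a) (tsize b) <= k -> ge_l ges a b -> ge_l ges b a -> same_ff ges k a b.
Proof.
case: hges => Hr Ha Ht Htot.
elim: k => [|k IH] a b Hfa Hfb S; first by move: (tsize_gt0 a); lia.
case: a Hfa S => [c|v|x y|x y|f u] //= Hfa;
case: b Hfb => [c'|v'|x' y'|x' y'|f' u'] //= Hfb S; rewrite !ge_lE /=;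
  try (by move=> h1 h2; have := Ha _ _ h1 h2);
  try (by move=> h1 h2; case: (Ha _ _ h1 h2) => ->).
case: (eqVneq f f') => [<-|ne].
  rewrite /= => l1 l2.
  apply: (all2_mono_in (P := fun x => is_factor x && (tsize x <= maxn (tsize u) (tsize u'))))
    (lexge_antisym l1 l2).
  - move=> x y /andP[? ?] /andP[? ?] /andP[? ?]; apply: IH => //; lia.
  - by rewrite /sortf all_sort; apply: factors_good => //; lia.
  - by rewrite /sortf all_sort; apply: factors_good => //; lia.
have ne' : f' != f by rewrite eq_sym.
rewrite /= ?andbF ?orbF => h1 h2.
by case: (Ha _ _ h1 h2) => e; rewrite e eqxx in ne.
Qed.
End Main.

Lemma mono_good (F : finFieldType) (V : eqType) (t : nat) (ges : rel (sym F V t))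
  (m : Defs.term F V t) : is_monomial m -> all is_factor (sortf ges m).
Proof. by move=> Hm; rewrite /sortf all_sort; apply: sub_all Hm => x /andP[]. Qed.

Theorem proposition1 (F : finFieldType) (n : nat) (hF : #|F| = (2 ^ n)%N)
  (V : eqType) (t : nat) (ges : rel (sym F V t)) (hges : total_order ges) :
  [/\ (forall m : term F V t, is_monomial m -> ge_p ges m m),
      (forall m1 m2 m3 : term F V t, is_monomial m1 -> is_monomial m2 ->
         is_monomial m3 -> ge_p ges m1 m2 -> ge_p ges m2 m3 -> ge_p ges m1 m3),
      (forall m1 m2 : term F V t, is_monomial m1 -> is_monomial m2 ->
         ge_p ges m1 m2 || ge_p ges m2 m1)
    & (forall m1 m2 : term F V t, is_monomial m1 -> is_monomial m2 ->
         ge_p ges m1 m2 -> ge_p ges m2 m1 -> same_mono ges m1 m2)].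
Proof.
split.
- move=> m Hm; apply: (lexge_refl (P := is_factor)); last exact: mono_good.
  by move=> x hx; apply: (ge_l_refl hges (N := Defs.tsize x)).
- move=> m1 m2 m3 H1 H2 H3; apply: (lexge_trans (P := is_factor));
    try exact: mono_good.
  move=> x y z hx hy hz.
  apply: (ge_l_trans hges (N := Defs.tsize x + Defs.tsize y + Defs.tsize z)) => //; lia.
- move=> m1 m2 H1 H2; apply: (lexge_total (P := is_factor)); try exact: mono_good.
  move=> x y hx hy.
  apply: (ge_l_total hges (N := Defs.tsize x + Defs.tsize y)) => //; lia.
- move=> m1 m2 H1 H2 l1 l2.
  apply: (all2_mono_in (P := is_factor)) (lexge_antisym l1 l2);
    try exact: mono_good.
  move=> x y hx hy /andP[h1 h2]; rewrite /same_f.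
  apply: ge_l_same => //; lia.
Qed.
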